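(* Let $G=(V,E,p,(V_{E},V_{O}))$ be a parity game and let $\bar\rho$ be the least game parity progress measure of $G$ (least with respect to the pointwise order on functions $V\to\mathbb{M}$). Then for every $v\in V$: (1) there is a strategy $\sigma_{O}$ of player Odd (not necessarily positional) such that every play $\pi$ starting in $v$ and consistent with $\sigma_{O}$ satisfies $\theta(\pi)\ge\bar\rho(v)$; (2) there is a positional strategy $\sigma_{E}$ of player Even such that every play $\pi$ starting in $v$ and consistent with $\sigma_{E}$ satisfies $\theta(\pi)\le\bar\rho(v)$.
   Context: A parity game $G=(V,E,p,(V_{E},V_{O}))$ consists of a finite set $V$ of vertices partitioned into $V_{E}$ (owned by player Even) and $V_{O}$ (owned by player Odd), a total edge relation $E\subseteq V\times V$, and a priority function $p:V\to\mathbb{N}$. Write $\mathrm{post}(v)=\{w:(v,w)\in E\}$ and $V_i=\{v:p(v)=i\}$. A play is an infinite path; Even wins it iff the least priority occurring infinitely often is even, otherwise Odd wins. A strategy of player $X$ is a partial function $\sigma:V^+\to V$ defined only on finite paths ending in a vertex $u_n$ owned by $X$, with value in $\mathrm{post}(u_n)$; positional if its value depends only on the last vertex. A play is consistent with $\sigma$ if $u_{n+1}=\sigma(u_1\cdots u_n)$ whenever defined. Let $d$ be one more than the largest priority. $\mathbb{M}$ consists of $\top$ and all tuples $(m_0,\dots,m_{d-1})\in\mathbb{N}^d$ with $m_i=0$ for even $i$ and $m_i\le|V_i|$ for odd $i$; $\mathbb{M}_{ext}$ consists of $\top$ and all tuples in $\mathbb{N}^d$ that are $0$ at even positions. Tuples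 are ordered lexicographically, $\top$ above all tuples. $m<_i m'$ means $(m_0,\dots,m_i)<(m'_0,\dots,m'_i)$ lexicographically (tuples $<_i\top$, $\top=_i\top$), $m=_i m'$ means agreement on positions $0..i$. For $\rho:V\to\mathbb{M}$ and $w\in\mathrm{post}(v)$, $\mathrm{Prog}(\rho,v,w)$ is the least $m\in\mathbb{M}$ with $m\ge_{p(v)}\rho(w)$ if $p(v)$ is even, and with $m>_{p(v)}\rho(w)$ or $m=\rho(w)=\top$ if $p(v)$ is odd. $\rho$ is a game parity progress measure if each $v\in V_{E}$ has some $w\in\mathrm{post}(v)$ with $\rho(v)\ge_{p(v)}\mathrm{Prog}(\rho,v,w)$, and each $v\in V_{O}$ satisfies this for all $w\in\mathrm{post}(v)$. Play value: for a priority $k$, a $k$-dominated stretch is a finite contiguous part of a play whose minimal priority is $k$; its degree is its number of vertices of priority $k$. $\theta(\pi)\in\mathbb{M}_{ext}$ is $\top$ if Odd wins $\pi$; otherwise it is the tuple with $0$ at even positions and, at each odd position $i$, the degree of the maximal $i$-dominated stretch that is a prefix of $\pi$ ($0$ if none). *)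

(* Defs.v *)
From mathcomp Require Import all_boot.

Set Implicit Arguments.
Unset Strict Implicit.
Unset Printing Implicit Defensive.

Section ParityGames.

(* A parity game: vertices V (finite), edge relation E, priority p,
   VE = vertices owned by Even (the complement is owned by Odd). *)
Variable V : finType.
Variable E : rel V.
Variable p : V -> nat.
Variable VE : pred V.

Definition dd : nat := (\max_(v : V) p v).+1.

Definition tup := {ffun 'I_dd -> nat}.

(* elements of M_ext / M : None is Top, Some m is a tuple *)
Definition meas := option tup.

Definition inM (m : meas) : Prop :=
  match m with
  | None => True
  | Some f => forall i : 'I_dd,
      (~~ odd i -> f i = 0) /\ (odd i -> f i <= #|[set v | p v == i]|)
  end.

Definition inMext (m : meas) : Prop :=
  match m with
  | None => True
  | Some f => forall i : 'I_dd, ~~ odd i -> f i = 0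
  end.

Definition tlt_upto (i : nat) (a b : tup) : Prop :=
  exists j : 'I_dd, j <= i /\ (forall k : 'I_dd, k < j -> a k = b k) /\ a j < b j.

Definition teq_upto (i : nat) (a b : tup) : Prop :=
  forall k : 'I_dd, k <= i -> a k = b k.

Definition lt_i (i : nat) (m m' : meas) : Prop :=
  match m, m' with
  | Some a, Some b => tlt_upto i a b
  | Some _, None => True
  | None, _ => False
  end.

Definition eq_i (i : nat) (m m' : meas) : Prop :=
  match m, m' with
  | Some a, Some b => teq_upto i a b
  | None, None => True
  | _, _ => False
  end.

Definition ge_i (i : nat) (m m' : meas) : Prop := lt_i i m' m \/ eq_i i m m'.

Definition mlt (m m' : meas) : Prop := lt_i dd.-1 m m'.
Definition mle (m m' : meas) : Prop := m = m' \/ mlt m m'.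

Definition prog_cond (rho : V -> meas) (v w : V) (m : meas) : Prop :=
  if odd (p v) then lt_i (p v) (rho w) m \/ (m = None /\ rho w = None)
  else ge_i (p v) m (rho w).

Definition IsProg (rho : V -> meas) (v w : V) (m : meas) : Prop :=
  inM m /\ prog_cond rho v w m /\
  forall m', inM m' -> prog_cond rho v w m' -> mle m m'.

Definition gppm (rho : V -> meas) : Prop :=
  (forall v, inM (rho v)) /\
  (forall v, v \in VE ->
     exists w, E v w /\ exists m, IsProg rho v w m /\ ge_i (p v) (rho v) m) /\
  (forall v, v \notin VE ->
     forall w, E v w -> exists m, IsProg rho v w m /\ ge_i (p v) (rho v) m).

Definition least_gppm (rho : V -> meas) : Prop :=
  gppm rho /\ forall rho', gppm rho' -> forall v, mle (rho v) (rho' v).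

Definition play (pi : nat -> V) : Prop := forall n, E (pi n) (pi n.+1).

Definition inf_often (pi : nat -> V) (k : nat) : Prop :=
  forall N, exists n, N <= n /\ p (pi n) = k.

Definition even_wins (pi : nat -> V) : Prop :=
  exists k, inf_often pi k /\ (forall j, j < k -> ~ inf_often pi j) /\ ~~ odd k.

Definition odd_wins (pi : nat -> V) : Prop :=
  exists k, inf_often pi k /\ (forall j, j < k -> ~ inf_often pi j) /\ odd k.

(* players: true = Even, false = Odd *)
Definition owned (X : bool) (v : V) : bool := (v \in VE) == X.

(* A strategy of X: a function on finite sequences; it is only
   meaningful (and constrained) on finite paths x :: s ending in a vertex
   owned by X, where its value must be a successor of the last vertex. *)
Definition strategy (X : bool) (sigma : seq V -> V) : Prop :=
  forall x s, path E x s -> owned X (last x s) -> E (last x s) (sigma (x :: s)).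

Definition positional (X : bool) (sigma : seq V -> V) : Prop :=
  forall x s y t, path E x s -> path E y t -> owned X (last x s) ->
    last x s = last y t -> sigma (x :: s) = sigma (y :: t).

Definition prefix (pi : nat -> V) (n : nat) : seq V := [seq pi k | k <- iota 0 n.+1].

Definition consistent (X : bool) (sigma : seq V -> V) (pi : nat -> V) : Prop :=
  forall n, owned X (pi n) -> pi n.+1 = sigma (prefix pi n).

(* the prefix pi_0 ... pi_{n-1} (n >= 1) is an i-dominated stretch *)
Definition dom_prefix (pi : nat -> V) (i n : nat) : Prop :=
  0 < n /\ (forall k, k < n -> i <= p (pi k)) /\ (exists k, k < n /\ p (pi k) = i).

Definition degree (pi : nat -> V) (i n : nat) : nat :=
  count (fun k => p (pi k) == i) (iota 0 n).

(* c is the degree of the maximal i-dominated stretch that is a prefix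
   of pi (0 if there is none) *)
Definition max_dom_degree (pi : nat -> V) (i c : nat) : Prop :=
  ((exists n, dom_prefix pi i n /\ degree pi i n = c) /\
   (forall n, dom_prefix pi i n -> degree pi i n <= c))
  \/ ((forall n, ~ dom_prefix pi i n) /\ c = 0).

Definition IsTheta (pi : nat -> V) (t : meas) : Prop :=
  (odd_wins pi -> t = None) /\
  (~ odd_wins pi -> exists f, t = Some f /\
     forall i : 'I_dd, (~~ odd i -> f i = 0) /\ (odd i -> max_dom_degree pi i (f i))).

End ParityGames.

(* Main.v *)
Require Import Defs.
From mathcomp Require Import all_boot.
From Stdlib Require Import Classical.
From mathcomp Require Import zify.

Set Implicit Arguments.
Unset Strict Implicit.
Unset Printing Implicit Defensive.


Section Order.
Variable V : finType.
Variable p : V -> nat.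

Local Notation D := (dd p).
Local Notation T := (tup p).
Local Notation M := (meas p).

Definition lexlt (a b : T) : Prop :=
  exists j : 'I_D, (forall k : 'I_D, k < j -> a k = b k) /\ a j < b j.

Lemma tlt_lex (a b : T) : tlt_upto D.-1 a b <-> lexlt a b.
Proof.
split; move=> [j [Hj1 Hj2]]; exists j => //.
by split => //; rewrite -ltnS prednK ?ltn_ord //; case: j {Hj1 Hj2} => j /= /leq_ltn_trans; apply.
Qed.

Lemma mltSS (a b : T) : mlt (Some a) (Some b) <-> lexlt a b.
Proof. exact: tlt_lex. Qed.

Lemma first_diff (a b : T) : a <> b ->
  exists j : 'I_D, (forall k : 'I_D, k < j -> a k = b k) /\ a j <> b j.
Proof.
move=> Hab.
have [i0 Hi0] : exists i, a i != b i.
  apply: NNPP => H; apply: Hab; apply/ffunP => i.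
  by apply/eqP; apply: NNPP => Hi; apply: H; exists i; apply/negP.
case: (@arg_minnP _ i0 (fun i => a i != b i) (fun i => val i) Hi0) => j Hj Hmin.
exists j; split; last by apply/eqP.
move=> k Hk; apply/eqP; apply: NNPP => /negP Hk'.
by move: (Hmin k Hk'); rewrite leqNgt Hk.
Qed.

Lemma lex_total (a b : T) : a = b \/ lexlt a b \/ lexlt b a.
Proof.
case: (classic (a = b)) => [->|H]; first by left.
right; have [j [H1 H2]] := first_diff H.
case: (ltngtP (a j) (b j)) => Hj.
- by left; exists j.
- by right; exists j; split => // k Hk; rewrite H1.
- by case: H2.
Qed.

Lemma lexlt_irr (a : T) : ~ lexlt a a.
Proof. by case=> j [_]; rewrite ltnn. Qed.

Lemma lexlt_trans (a b c : T) : lexlt a b -> lexlt b c -> lexlt a c.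
Proof.
move=> [j [H1 H2]] [j' [H1' H2']].
case: (ltngtP j j') => Hjj.
- exists j; split; first by move=> k Hk; rewrite H1 // H1' // (ltn_trans Hk Hjj).
  by rewrite -(H1' _ Hjj).
- exists j'; split; first by move=> k Hk; rewrite H1 ?H1' // (ltn_trans Hk Hjj).
  by rewrite (H1 _ Hjj).
- have e : j = j' by apply: val_inj.
  subst j'; exists j; split; first by move=> k Hk; rewrite H1 ?H1'.
  exact: ltn_trans H2 H2'.
Qed.

Lemma comp_le_lex (a b : T) : (forall i, a i <= b i) -> a = b \/ lexlt a b.
Proof.
move=> H; case: (classic (a = b)) => [->|Hab]; first by left.
right; have [j [H1 H2]] := first_diff Hab; exists j; split => //.
by rewrite ltn_neqAle H andbT; apply/eqP.
Qed.

Lemma mle_refl (m : M) : mle m m.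
Proof. by left. Qed.

Lemma mlt_None (m : M) : ~ mlt None m.
Proof. by rewrite /mlt /lt_i. Qed.

Lemma mlt_SomeNone (a : T) : mlt (Some a) None.
Proof. by []. Qed.

Lemma mlt_trans (m1 m2 m3 : M) : mlt m1 m2 -> mlt m2 m3 -> mlt m1 m3.
Proof.
case: m1 => [a|] //; case: m2 => [b|] //; case: m3 => [c|] //.
rewrite !mltSS; exact: lexlt_trans.
Qed.

Lemma mlt_irr (m : M) : ~ mlt m m.
Proof. by case: m => [a|] //; rewrite mltSS; apply: lexlt_irr. Qed.

Lemma mle_trans (m1 m2 m3 : M) : mle m1 m2 -> mle m2 m3 -> mle m1 m3.
Proof.
rewrite /mle => -[->|H1] [<-|H2]; [by left | by right | by right | by right; apply: mlt_trans H1 H2].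
Qed.

Lemma mle_mlt_trans (m1 m2 m3 : M) : mle m1 m2 -> mlt m2 m3 -> mlt m1 m3.
Proof. by rewrite /mle => -[->|H1] // H2; apply: mlt_trans H1 H2. Qed.

Lemma mlt_mle_trans (m1 m2 m3 : M) : mlt m1 m2 -> mle m2 m3 -> mlt m1 m3.
Proof. by rewrite /mle => H1 [<-|H2] //; apply: mlt_trans H1 H2. Qed.

Lemma mle_total (m1 m2 : M) : mle m1 m2 \/ mlt m2 m1.
Proof.
case: m1 => [a|]; case: m2 => [b|].
- case: (lex_total a b) => [->|[H|H]]; [by left; left| by left; right; apply/mltSS | by right; apply/mltSS].
- by left; right.
- by right.
- by left; left.
Qed.

Lemma mle_mlt_false (m1 m2 : M) : mle m1 m2 -> mlt m2 m1 -> False.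
Proof. by move=> H1 H2; apply: (mlt_irr (mle_mlt_trans H1 H2)). Qed.

Lemma mle_None (m : M) : mle m None.
Proof. by rewrite /mle; case: m => [a|]; [right | left]. Qed.

Lemma mle_comp (a b : T) : (forall i, a i <= b i) -> mle (Some a) (Some b).
Proof. by rewrite /mle => /comp_le_lex [->|H]; [left | right; apply/mltSS]. Qed.

Lemma mle_ge_i (q : nat) (m m' : M) : mle m m' -> ge_i q m' m.
Proof.
rewrite /mle => -[->|]; first by case: m' => [a|]; right => //= k.
case: m => [a|] //; case: m' => [b|] //; last by left.
move=> /mltSS [j [H1 H2]].
case: (leqP j q) => Hj.
- by left; exists j.
- by right => k Hk; rewrite H1 // (leq_ltn_trans Hk Hj).
Qed.

Definition ltb (n : nat) (a b : T) : Prop :=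
  exists j : 'I_D, j < n /\ (forall k : 'I_D, k < j -> a k = b k) /\ a j < b j.
Definition eqb (n : nat) (a b : T) : Prop := forall k : 'I_D, k < n -> a k = b k.

Lemma wf_ltb n : well_founded (ltb n).
Proof.
elim: n => [|n IH].
  by move=> a; constructor => b [j [Hj _]].
have key : forall y, Acc (ltb n) y -> forall z, eqb n z y -> Acc (ltb n.+1) z.
  move=> y Acy; elim: Acy => {}y _ IHo z Hzy.
  case: (ltnP n D) => HnD.
  - pose o := Ordinal HnD.
    suff: forall k (z : T), z o <= k -> eqb n z y -> Acc (ltb n.+1) z by apply.
    elim=> [|k IHk] z' Hz' Hz'y; constructor => x [j [Hj [H1 H2]]].
    + case: (ltngtP j n) => Hjn.
      * apply: (IHo x _ x (fun _ _ => erefl)).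
        exists j; split => //; split; first by move=> k' Hk'; rewrite H1 // Hz'y // (ltn_trans Hk' Hjn).
        by rewrite -Hz'y.
      * by move: Hj; rewrite ltnS leqNgt Hjn.
      * have ejo : j = o by apply: val_inj.
        by move: H2; rewrite ejo; move: Hz'; rewrite leqn0 => /eqP ->.
    + case: (ltngtP j n) => Hjn.
      * apply: (IHo x _ x (fun _ _ => erefl)).
        exists j; split => //; split; first by move=> k' Hk'; rewrite H1 // Hz'y // (ltn_trans Hk' Hjn).
        by rewrite -Hz'y.
      * by move: Hj; rewrite ltnS leqNgt Hjn.
      * have ejo : j = o by apply: val_inj.
        apply: IHk; first by rewrite -ltnS (leq_trans _ Hz') // -ejo.
        by move=> k' Hk'; rewrite H1 ?Hz'y // Hjn.
  - constructor => x [j [Hj [H1 H2]]].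
    case: (ltngtP j n) => Hjn.
    + apply: (IHo x _ x (fun _ _ => erefl)).
      exists j; split => //; split; first by move=> k' Hk'; rewrite H1 // Hzy // (ltn_trans Hk' Hjn).
      by rewrite -Hzy.
    + by move: Hj; rewrite ltnS leqNgt Hjn.
    + by move: (ltn_ord j); rewrite Hjn ltnNge HnD.
move=> a; apply: (key a) => //; exact: IH.
Qed.

Lemma wf_lexlt : well_founded lexlt.
Proof.
move=> a; have := wf_ltb D a; elim=> {}a _ IH; constructor => b Hb.
by apply: IH; case: Hb => j [H1 H2]; exists j.
Qed.

Lemma wf_min (R : T -> T -> Prop) (P : T -> Prop) : well_founded R ->
  (exists x, P x) -> exists x, P x /\ forall y, R y x -> ~ P y.
Proof.
move=> wfR [x Px]; apply: NNPP => H.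
have: forall z, Acc R z -> ~ P z.
  move=> z Az; elim: Az => z0 _ IH0 Pz0; apply: H; exists z0; split; first exact: Pz0.
  move=> y Ryz Py; exact: (IH0 y Ryz Py).
by move/(_ x (wfR x)).
Qed.

Lemma meas_min (P : M -> Prop) : (exists m, P m) ->
  exists m, P m /\ forall m', P m' -> mle m m'.
Proof.
move=> [m0 Pm0].
case: (classic (exists a, P (Some a))) => [Ha|Hna].
- have [a [Pa Hmin]] := wf_min wf_lexlt Ha.
  exists (Some a); split => // [[b|]] Pb; last by right.
  case: (lex_total a b) => [->|[H|H]]; [by left | by right; apply/mltSS |].
  by case: (Hmin b H).
- exists None; split; first by case: m0 Pm0 => // a Pa; case: Hna; exists a.
  by case=> [b Pb|]; [case: Hna; exists b | left].
Qed.

Definition flip (B : nat) (a : T) : T := [ffun i => B - a i].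

Lemma meas_max (P : M -> Prop) (B : nat) : (exists m, P m) ->
  (forall a, P (Some a) -> forall i, a i <= B) ->
  exists m, P m /\ forall m', P m' -> mle m' m.
Proof.
move=> [m0 Pm0] Hb.
case: (classic (P None)) => [PN|PN].
  by exists None; split => // m' _; apply: mle_None.
have Hex : exists c, exists a, P (Some a) /\ c = flip B a.
  case: m0 Pm0 => [a Pa|//]; by exists (flip B a); exists a.
have [c [[a [Pa Hc]] Hmin]] := wf_min wf_lexlt Hex.
exists (Some a); split => // [[b|]] Pb; last by [].
case: (lex_total b a) => [->|[H|H]]; [by left | by right; apply/mltSS |].
exfalso; apply: (Hmin (flip B b)); last by exists b.
rewrite Hc; case: H => j [H1 H2]; exists j; split.
  by move=> k Hk; rewrite !ffunE H1.
rewrite !ffunE; have := Hb _ Pb j; have := Hb _ Pa j; lia.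
Qed.

End Order.


Lemma nat_min (P : nat -> Prop) : (exists n, P n) -> exists n, P n /\ forall m, m < n -> ~ P m.
Proof.
move=> [n Pn]; elim: n {-2}n (leqnn n) Pn => [|N IH] n Hn Pn.
  by exists n; split => // m; move: Hn; rewrite leqn0 => /eqP ->.
case: (classic (exists m, m < n /\ P m)) => [[m [Hm Pm]]|H].
  by apply: (IH m) => //; rewrite -ltnS (leq_trans Hm).
by exists n; split => // m Hm Pm; apply: H; exists m.
Qed.

Section Plays.
Variable V : finType.
Variable p : V -> nat.

Definition S_ (pi : nat -> V) (i n : nat) : Prop := forall k, k < n -> i <= p (pi k).
Definition MaxDeg (pi : nat -> V) (i c : nat) : Prop :=
  (forall n, S_ pi i n -> degree p pi i n <= c) /\ (exists n, S_ pi i n /\ degree p pi i n = c).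

Lemma degreeS pi i n : degree p pi i n.+1 = degree p pi i n + (p (pi n) == i).
Proof. by rewrite /degree -addn1 iotaD count_cat /= addn0 add0n. Qed.

Lemma degree0 pi i : degree p pi i 0 = 0.
Proof. by []. Qed.

Lemma degree_mono pi i m n : m <= n -> degree p pi i m <= degree p pi i n.
Proof.
move=> /subnK <-; elim: (n - m) => [|k IH] //; rewrite addSn degreeS.
exact: leq_trans IH (leq_addr _ _).
Qed.

Lemma degree_shift pi i n :
  degree p pi i n.+1 = (p (pi 0) == i) + degree p (fun k => pi k.+1) i n.
Proof.
rewrite /degree /= -[X in iota X _](addn0 1) iotaDl count_map.
by congr (_ + _); apply: eq_count => k /=; rewrite add1n.
Qed.

Lemma degree_pos pi i n : 0 < degree p pi i n -> exists k, k < n /\ p (pi k) = i.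
Proof.
rewrite /degree -has_count => /hasP [k]; rewrite mem_iota add0n => /andP [_ Hk] /eqP Hp.
by exists k.
Qed.

Lemma degree_ge pi i n k : k < n -> p (pi k) = i -> 0 < degree p pi i n.
Proof.
by move=> Hk Hp; rewrite /degree -has_count; apply/hasP; exists k; rewrite ?mem_iota ?Hp.
Qed.

Lemma MaxDeg_uniq pi i c c' : MaxDeg pi i c -> MaxDeg pi i c' -> c = c'.
Proof.
move=> [H1 [n [Sn Hc]]] [H1' [n' [Sn' Hc']]].
have := H1 n' Sn'; have := H1' n Sn; lia.
Qed.

Lemma mdd_MaxDeg pi i c : max_dom_degree p pi i c -> MaxDeg pi i c.
Proof.
case=> [[[n [[Hn0 [HS _]] <-]] Hmax] | [Hno ->]].
- split; last by exists n.
  move=> m Sm; case: (posnP (degree p pi i m)) => [->//|Hpos].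
  apply: Hmax; have [k [Hk Hpk]] := degree_pos Hpos.
  split; first by case: m Sm Hk Hpos.
  by split=> //; exists k.
- split; last by exists 0.
  move=> m Sm; case: (posnP (degree p pi i m)) => [->//|Hpos].
  have [k [Hk Hpk]] := degree_pos Hpos.
  exfalso; apply: (Hno m); split; first by case: m Sm Hk Hpos.
  by split=> //; exists k.
Qed.

Lemma MaxDeg_mdd pi i c : MaxDeg pi i c -> max_dom_degree p pi i c.
Proof.
move=> [Hmax [n [Sn Hn]]].
case: (posnP c) => Hc.
- right; split => // m [Hm0 [HSm [k [Hk Hpk]]]].
  by have := Hmax m HSm; rewrite Hc leqn0 => /eqP; have := degree_ge Hk Hpk => /[swap] ->.
- left; split.
  + exists n; split => //; split; first by case: n Sn Hn => [|n] //; rewrite degree0 => _ H; move: Hc; rewrite -H.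
    split => //; apply: degree_pos; by rewrite Hn.
  + by move=> m [_ [HSm _]]; apply: Hmax.
Qed.

Lemma inf_tail1 (pi1 pi2 : nat -> V) A B k : (forall m, pi1 (A + m) = pi2 (B + m)) ->
  inf_often p pi1 k -> inf_often p pi2 k.
Proof.
move=> Ht Hinf N; have [n [Hn Hp]] := Hinf (N + A).
exists (B + (n - A)); split; first by lia.
by rewrite -Ht subnKC // (leq_trans (leq_addl _ _) Hn).
Qed.

Lemma inf_tail (pi1 pi2 : nat -> V) A B k : (forall m, pi1 (A + m) = pi2 (B + m)) ->
  inf_often p pi1 k <-> inf_often p pi2 k.
Proof. by move=> Ht; split; apply: inf_tail1. Qed.

Lemma odd_wins_tail (pi1 pi2 : nat -> V) A B : (forall m, pi1 (A + m) = pi2 (B + m)) ->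
  odd_wins p pi1 <-> odd_wins p pi2.
Proof.
move=> Ht; split => -[k [H1 [H2 H3]]]; exists k.
- split; first by apply: inf_tail1 Ht H1.
  by split=> // j Hj Hi; apply: (H2 j Hj); apply: (inf_tail1 (A:=B) (B:=A)) Hi.
- split; first by apply: (inf_tail1 (A:=B) (B:=A)) H1.
  by split=> // j Hj Hi; apply: (H2 j Hj); apply: inf_tail1 Ht Hi.
Qed.

Lemma not_inf (pi : nat -> V) j : ~ inf_often p pi j -> exists N, forall n, N <= n -> p (pi n) <> j.
Proof.
move=> H; apply: NNPP => H'; apply: H => N; apply: NNPP => H2; apply: H'; exists N => n Hn Hp.
by apply: H2; exists n.
Qed.

Lemma eventually_ge (pi : nat -> V) k : (forall j, j < k -> ~ inf_often p pi j) ->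
  exists N, forall n, N <= n -> k <= p (pi n).
Proof.
elim: k => [|k IH] H; first by exists 0.
have [N1 HN1] := IH (fun j Hj => H j (ltnW Hj)).
have [N2 HN2] := not_inf (H k (ltnSn k)).
exists (maxn N1 N2) => n Hn.
have := HN1 n (leq_trans (leq_maxl _ _) Hn); have := HN2 n (leq_trans (leq_maxr _ _) Hn).
rewrite leq_eqVlt; move=> H1 /orP [/eqP H2|//]; by case: H1.
Qed.

Lemma least_inf (pi : nat -> V) : exists k, inf_often p pi k /\ forall j, j < k -> ~ inf_often p pi j.
Proof.
have [v Hv] : exists v, forall N, exists n, N <= n /\ pi n = v.
  apply: NNPP => H.
  have H' : forall v, exists N, forall n, N <= n -> pi n <> v.
    move=> v; apply: NNPP => H2; apply: H; exists v => N; apply: NNPP => H3; apply: H2.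
    by exists N => n Hn Hpn; apply: H3; exists n.
  have [Nf HNf] := fin_all_exists H'.
  by apply: (HNf (pi (\max_v Nf v)) (\max_v Nf v)) => //; apply: leq_bigmax.
have Hpv : inf_often p pi (p v).
  by move=> N; have [n [Hn Hpn]] := Hv N; exists n; split => //; rewrite Hpn.
have [k [Hk Hmin]] := @nat_min (inf_often p pi) (ex_intro _ (p v) Hpv).
by exists k; split => // j Hj; apply: Hmin.
Qed.

Lemma theta_Some (pi : nat -> V) f : IsTheta pi (Some f) -> ~ odd_wins p pi /\
  forall i : 'I_(dd p), (~~ odd i -> f i = 0) /\ (odd i -> MaxDeg pi i (f i)).
Proof.
case=> H1 H2; have Hn : ~ odd_wins p pi by move/H1.
split=> //; have [f' [[<-] Hf']] := H2 Hn.
by move=> i; have [Ha Hb] := Hf' i; split=> // /Hb /mdd_MaxDeg.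
Qed.

Lemma theta_None (pi : nat -> V) : IsTheta (p:=p) pi None -> odd_wins p pi.
Proof. by case=> _ H2; apply: NNPP => /H2 [f [Hf _]]. Qed.

Lemma MaxDeg_exists (pi : nat -> V) i : ~ odd_wins p pi -> odd i -> exists c, MaxDeg pi i c.
Proof.
move=> Hno Hodd.
suff [L [SL HL]] : exists L, S_ pi i L /\ forall n, S_ pi i n -> degree p pi i n <= degree p pi i L.
  by exists (degree p pi i L); split => //; exists L.
case: (classic (exists t, p (pi t) < i)) => [Hex|Hall].
- have [L [HL Hmin]] := nat_min Hex.
  exists L; split; first by move=> k Hk; rewrite leqNgt; apply/negP => /Hmin; apply; exact: Hk.
  move=> n Sn; apply: degree_mono; rewrite leqNgt; apply/negP => HLn.
  by have := Sn L HLn; rewrite leqNgt HL.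
- have Hge : forall t, i <= p (pi t) by move=> t; rewrite leqNgt; apply/negP => H; apply: Hall; exists t.
  have Hni : ~ inf_often p pi i.
    move=> Hinf; apply: Hno; exists i; split => //; split => // j Hj Hinf2.
    by have [n [_ Hn]] := Hinf2 0; have := Hge n; rewrite Hn leqNgt Hj.
  have [N HN] := not_inf Hni.
  exists N; split; first by move=> k _; apply: Hge.
  move=> n _; case: (leqP n N) => Hn; first exact: degree_mono.
  rewrite -(subnKC (ltnW Hn)); elim: (n - N) => [|m IH]; first by rewrite addn0.
  by rewrite addnS degreeS; move/eqP/negbTE: (HN (N + m) (leq_addr _ _)) => ->; rewrite addn0.
Qed.

Lemma theta_exists (pi : nat -> V) : exists t, IsTheta (p:=p) pi t.
Proof.
case: (classic (odd_wins p pi)) => Hw.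
  by exists None; split => // /(_ Hw).
have H : forall i : 'I_(dd p), exists c, (~~ odd i -> c = 0) /\ (odd i -> max_dom_degree p pi i c).
  move=> i; case Ho: (odd i).
  - by have [c Hc] := MaxDeg_exists Hw Ho; exists c; split => // _; apply: MaxDeg_mdd.
  - by exists 0.
have [g Hg] := fin_all_exists H.
exists (Some [ffun i => g i]); split => // _; exists [ffun i => g i]; split => // i.
by rewrite ffunE; apply: Hg.
Qed.

End Plays.


Section Tup.
Variable V : finType.
Variable p : V -> nat.
Local Notation D := (dd p).
Local Notation T := (tup p).
Local Notation M := (meas p).

Definition tge (q : nat) (a b : T) := tlt_upto q b a \/ teq_upto q a b.

Lemma teq_refl q (a : T) : teq_upto q a a.
Proof. by []. Qed.
Lemma teq_sym q (a b : T) : teq_upto q a b -> teq_upto q b a.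
Proof. by move=> H k Hk; rewrite H. Qed.
Lemma teq_trans q (a b c : T) : teq_upto q a b -> teq_upto q b c -> teq_upto q a c.
Proof. by move=> H1 H2 k Hk; rewrite H1 ?H2. Qed.

Lemma tlt_teq q (a b c : T) : tlt_upto q a b -> teq_upto q b c -> tlt_upto q a c.
Proof.
move=> [j [Hj [H1 H2]]] H3; exists j; split => //; split; last by rewrite -H3.
by move=> k Hk; rewrite H1 // H3 // (leq_trans (ltnW Hk) Hj).
Qed.

Lemma teq_tlt q (a b c : T) : teq_upto q a b -> tlt_upto q b c -> tlt_upto q a c.
Proof.
move=> H3 [j [Hj [H1 H2]]]; exists j; split => //; split; last by rewrite H3.
by move=> k Hk; rewrite H3 ?H1 // (leq_trans (ltnW Hk) Hj).
Qed.

Lemma tlt_trans q (a b c : T) : tlt_upto q a b -> tlt_upto q b c -> tlt_upto q a c.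
Proof.
move=> [j [Hj [H1 H2]]] [j' [Hj' [H1' H2']]].
case: (ltngtP j j') => Hjj.
- exists j; split => //; split; first by move=> k Hk; rewrite H1 // H1' // (ltn_trans Hk Hjj).
  by rewrite -(H1' _ Hjj).
- exists j'; split => //; split; first by move=> k Hk; rewrite H1 ?H1' // (ltn_trans Hk Hjj).
  by rewrite (H1 _ Hjj).
- have e : j = j' by apply: val_inj.
  subst j'; exists j; split => //; split; first by move=> k Hk; rewrite H1 ?H1'.
  exact: ltn_trans H2 H2'.
Qed.

Lemma tlt_teq_false q (a b : T) : tlt_upto q a b -> teq_upto q a b -> False.
Proof. by move=> [j [Hj [_ H2]]] H; move: H2; rewrite H // ltnn. Qed.

Lemma tge_trans q (a b c : T) : tge q a b -> tge q b c -> tge q a c.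
Proof.
move=> [H1|H1] [H2|H2].
- by left; apply: tlt_trans H2 H1.
- by left; apply: teq_tlt (teq_sym H2) H1.
- by left; apply: tlt_teq H2 (teq_sym H1).
- by right; apply: teq_trans H1 H2.
Qed.

Lemma tlt_mono q j (a b : T) : tlt_upto q a b -> j <= q -> tlt_upto j a b \/ teq_upto j a b.
Proof.
move=> [j0 [Hj0 [H1 H2]]] Hjq.
case: (leqP j0 j) => Hj.
- by left; exists j0.
- by right => k Hk; rewrite H1 // (leq_ltn_trans Hk Hj).
Qed.

Lemma tge_mono q j (a b : T) : tge q a b -> j <= q -> tge j a b.
Proof.
move=> [H|H] Hjq.
- by case: (tlt_mono H Hjq) => H'; [left | right; apply: teq_sym].
- by right => k Hk; rewrite H // (leq_trans Hk Hjq).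
Qed.

Lemma ge_i_trans q (m1 m2 m3 : M) : ge_i q m1 m2 -> ge_i q m2 m3 -> ge_i q m1 m3.
Proof.
case: m1 => [a|]; case: m2 => [b|]; case: m3 => [c|] //=; rewrite /ge_i /=; try tauto.
move=> H1 H2; have := @tge_trans q a b c; rewrite /tge; tauto.
Qed.

Lemma lt_ge_i q (m1 m2 m3 : M) : lt_i q m1 m2 -> ge_i q m3 m2 -> lt_i q m1 m3.
Proof.
case: m1 => [a|]; case: m2 => [b|]; case: m3 => [c|] //=; rewrite /ge_i /=; try tauto.
move=> H [H2|H2]; [exact: tlt_trans H H2 | exact: tlt_teq H (teq_sym H2)].
Qed.

Lemma ge_i_None q (a : T) : ~ ge_i q (Some a) None.
Proof. by rewrite /ge_i /=; tauto. Qed.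

Lemma nat_const (f : nat -> nat) N : (forall n, N <= n -> f n.+1 <= f n) ->
  exists N', N <= N' /\ forall n, N' <= n -> f n = f N'.
Proof.
move=> H.
have Hmono : forall n m, N <= n -> n <= m -> f m <= f n.
  move=> n m Hn /subnK <-; elim: (m - n) => [|k IH] //=.
  by rewrite addSn; apply: leq_trans (H _ _) IH; apply: leq_trans Hn (leq_addl _ _).
suff: forall v n, N <= n -> f n <= v -> exists N', n <= N' /\ forall m, N' <= m -> f m = f N'.
  move=> /(_ (f N) N (leqnn N) (leqnn _)) [N' [HN' H']]; by exists N'.
elim=> [|v IH] n Hn Hv.
  exists n; split => // m Hm; have := Hmono _ _ Hn Hm; lia.
case: (classic (exists m, n <= m /\ f m < f n)) => [[m [Hm Hfm]]|Hno].
- have [N' [HN' H']] := IH m (leq_trans Hn Hm) (ltnSE (leq_trans Hfm Hv)).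
  by exists N'; split => //; apply: leq_trans Hm HN'.
- exists n; split => // m Hm; apply/eqP; rewrite eqn_leq (Hmono _ _ Hn Hm) /= leqNgt.
  by apply/negP => H1; apply: Hno; exists m.
Qed.

Section Desc.
Variable pi : nat -> V.
Variable a : nat -> T.
Hypothesis Hstep : forall n, if odd (p (pi n)) then tlt_upto (p (pi n)) (a n.+1) (a n)
                             else tge (p (pi n)) (a n) (a n.+1).

Lemma Hstep_ge n : tge (p (pi n)) (a n) (a n.+1).
Proof. by have := Hstep n; case: ifP => _ // H; left. Qed.

Lemma desc_const k N : (forall n, N <= n -> k <= p (pi n)) ->
  exists N', forall n, N' <= n -> teq_upto k (a n) (a N').
Proof.
move=> Hk.
have Hge : forall n, N <= n -> tge k (a n) (a n.+1).
  by move=> n Hn; apply: tge_mono (Hstep_ge n) (Hk n Hn).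
suff: forall i, i <= k.+1 -> exists N', N <= N' /\ forall n, N' <= n -> forall o : 'I_D, o < i -> a n o = a N' o.
  by move=> /(_ k.+1 (leqnn _)) [N' [_ H]]; exists N' => n Hn o Ho; apply: H.
elim=> [|i IH] Hi; first by exists N.
have [N1 [HN1 H1]] := IH (ltnW Hi).
case: (ltnP i D) => HiD; last first.
  exists N1; split => // n Hn o Ho; apply: H1 => //.
  by rewrite (leq_trans (ltn_ord o) HiD).
pose oi := Ordinal HiD.
have Hdec : forall n, N1 <= n -> a n.+1 oi <= a n oi.
  move=> n Hn; case: (Hge n (leq_trans HN1 Hn)) => [[j [Hj [Hj1 Hj2]]]|Heq]; last by rewrite Heq.
  case: (ltngtP j i) => Hji.
  - by move: Hj2; rewrite (H1 n Hn j Hji) (H1 n.+1 (leqW Hn) j Hji) ltnn.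
  - by rewrite Hj1.
  - have -> : oi = j by apply: val_inj; rewrite /= Hji.
    exact: ltnW.
have [N2 [HN2 H2]] := @nat_const (fun n => a n oi) N1 Hdec.
exists N2; split; first by apply: leq_trans HN1 HN2.
move=> n Hn o; rewrite ltnS leq_eqVlt => /orP [/eqP Ho|Ho].
- have -> : o = oi by apply: val_inj; rewrite /= Ho.
  by apply: H2.
- by rewrite (H1 n (leq_trans HN2 Hn) o Ho) (H1 N2 HN2 o Ho).
Qed.

Lemma desc_even_wins : ~ odd_wins p pi.
Proof.
move=> [k [Hinf [Hlow Hodd]]].
have [N HN] := eventually_ge Hlow.
have [N' HN'] := desc_const HN.
have [n [Hn Hpn]] := Hinf (maxn N N').
have := Hstep n; rewrite Hpn Hodd => Hlt.
apply: (tlt_teq_false Hlt).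
apply: teq_trans (HN' n.+1 _) (teq_sym (HN' n _)).
  by apply: leq_trans (leq_maxr _ _) (leqW Hn).
by apply: leq_trans (leq_maxr _ _) Hn.
Qed.

Definition aliveb (i k : nat) := all (fun t => i <= p (pi t)) (iota 0 k).
Definition cnt (i : 'I_D) k :=
  if odd i then count (fun t => (p (pi t) == i) && aliveb i t.+1) (iota 0 k) else 0.
Definition xx k : T := [ffun i => cnt i k + (if aliveb i k then a k i else 0)].

Lemma aliveS i k : aliveb i k.+1 = aliveb i k && (i <= p (pi k)).
Proof. by rewrite /aliveb -(addn1 k) iotaD all_cat /= andbT. Qed.

Lemma cntS i k : cnt i k.+1 = cnt i k + (odd i && (p (pi k) == i) && aliveb i k.+1).
Proof.
rewrite /cnt; case: (odd i); last by [].
by rewrite -(addn1 k) iotaD count_cat /= addn0 add0n addn1.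
Qed.

Lemma alive_mono i j k : i <= j -> aliveb j k -> aliveb i k.
Proof. by move=> Hij /allP H; apply/allP => t /H /(leq_trans Hij). Qed.

Lemma xx0 : xx 0 = a 0.
Proof. by apply/ffunP => i; rewrite ffunE /cnt /=; case: (odd i). Qed.

Lemma xx_hi k (i : 'I_D) : p (pi k) < i -> xx k.+1 i <= xx k i.
Proof.
move=> Hi; rewrite !ffunE cntS aliveS (leqNgt i) Hi !andbF addn0.
by rewrite addn0 leq_addr.
Qed.

Lemma xx_lo k (i : 'I_D) : i <= p (pi k) -> xx k.+1 i =
  cnt i k + (odd i && (p (pi k) == i) && aliveb i k) + (if aliveb i k then a k.+1 i else 0).
Proof. by move=> Hi; rewrite !ffunE cntS aliveS Hi !andbT. Qed.

Lemma xx_step k : mle (Some (xx k.+1)) (Some (xx k)).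
Proof.
set q := p (pi k).
have Hxk : forall i : 'I_D, xx k i = cnt i k + (if aliveb i k then a k i else 0) by move=> i; rewrite ffunE.
have Hcase : tlt_upto q (a k.+1) (a k) \/ (~~ odd q /\ teq_upto q (a k) (a k.+1)).
  have := Hstep k; rewrite -/q.
  by case: ifP => Hq H; [left | case: H; [left | right; split; [apply/negbT|]]].
case: Hcase => [[j [Hj [Hj1 Hj2]]] | [Hq Heq]].
- case: (boolP (aliveb j k && ~~ (odd j && (q == j)))) => [/andP [Hal Hnq] | Hc].
  + right; apply/mltSS; exists j; split.
    * move=> l Hl; rewrite xx_lo ?Hxk; last by apply: leq_trans (ltnW Hl) Hj.
      have -> : (q == l) = false by apply/negbTE; rewrite neq_ltn (leq_trans Hl Hj) orbT.
      by rewrite andbF addn0 Hj1.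
    * rewrite xx_lo // Hxk (negbTE Hnq) Hal addn0.
      by rewrite ltn_add2l.
  + apply: mle_comp => i.
    case: (ltnP q i) => Hqi; first exact: xx_hi.
    rewrite xx_lo // Hxk.
    case: (ltngtP i j) => Hij.
    * have -> : (q == i) = false by apply/negbTE; rewrite neq_ltn (leq_trans Hij Hj) orbT.
      by rewrite andbF addn0 Hj1.
    * move: Hc; rewrite negb_and negbK => /orP [Hna|/andP [_ /eqP Hqj]].
      - have -> : aliveb i k = false by apply/negbTE; apply: contra Hna; apply: alive_mono; rewrite ltnW.
        by rewrite andbF !addn0.
      - by move: Hqi; rewrite leqNgt Hqj Hij.
    * have eij : i = j by apply: val_inj.
      subst i; case: (aliveb j k) => /=; last by rewrite andbF !addn0.
      case: (odd j && (q == j)) => /=; last by rewrite addn0 leq_add2l; apply: ltnW.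
      by rewrite -addnA leq_add2l add1n.
- apply: mle_comp => i.
  case: (ltnP q i) => Hqi; first exact: xx_hi.
  rewrite xx_lo // Hxk.
  have -> : odd i && (q == i) = false.
    by case: eqP => [Hqi'|]; [rewrite -Hqi' (negbTE Hq) | rewrite andbF].
  by rewrite addn0 Heq.
Qed.

Lemma xx_le k : mle (Some (xx k)) (Some (a 0)).
Proof.
elim: k => [|k IH]; first by rewrite xx0; left.
exact: mle_trans (xx_step k) IH.
Qed.

Lemma desc_theta f : IsTheta pi (Some f) -> mle (Some f) (Some (a 0)).
Proof.
move=> /theta_Some [_ Hf].
have H : forall i : 'I_D, exists n, forall K, n <= K -> f i <= xx K i.
  move=> i; have [He Ho] := Hf i; case Hodd: (odd i).
  - have [_ [n [Sn Hn]]] := Ho Hodd.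
    exists n => K HK; rewrite ffunE /cnt Hodd -Hn.
    apply: leq_trans (leq_addr _ _).
    rewrite /degree -(subnKC HK) iotaD count_cat.
    apply: leq_trans (leq_addr _ _); apply: leq_trans (eq_leq _) (leqnn _).
    apply: eq_in_count => t; rewrite mem_iota add0n => /andP [_ Ht].
    have -> : aliveb i t.+1 by apply/allP => t'; rewrite mem_iota add0n ltnS => /andP [_ Ht']; apply: Sn; apply: leq_ltn_trans Ht' Ht.
    by rewrite andbT.
  - by exists 0 => K _; rewrite He ?Hodd.
have [g Hg] := fin_all_exists H.
apply: mle_trans (xx_le (\max_i g i)).
apply: mle_comp => i; apply: Hg; exact: leq_bigmax.
Qed.

End Desc.
End Tup.


Section Game.
Variable V : finType.
Variable E : rel V.
Variable p : V -> nat.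
Variable VE : pred V.
Local Notation D := (dd p).
Local Notation T := (tup p).
Local Notation M := (meas p).

Lemma prefixS (pi : nat -> V) n : Defs.prefix pi n.+1 = rcons (Defs.prefix pi n) (pi n.+1).
Proof. by rewrite /Defs.prefix -(addn1 n.+1) iotaD map_cat /= add0n cats1. Qed.

Lemma prefix_last (pi : nat -> V) n x0 : last x0 (Defs.prefix pi n) = pi n.
Proof. by case: n => [|n] //; rewrite prefixS last_rcons. Qed.

Lemma prefix_cons (pi : nat -> V) n : Defs.prefix pi n = pi 0 :: behead (Defs.prefix pi n).
Proof. by []. Qed.

Lemma part2 (Etotal : forall v, exists w, E v w) (rho : V -> M) (Hg : gppm E VE rho) (v : V) :
  exists sigmaE : seq V -> V, strategy E VE true sigmaE /\ positional E VE true sigmaE /\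
     forall pi : nat -> V, play E pi -> pi 0 = v -> consistent VE true sigmaE pi ->
       forall t, IsTheta pi t -> mle t (rho v).
Proof.
case: Hg => [HinM [HgE HgO]].
have Hch : forall u, exists w, E u w /\ (u \in VE -> exists m, IsProg rho u w m /\ ge_i (p u) (rho u) m).
  move=> u; case: (boolP (u \in VE)) => Hu.
  - by have [w [Euw Hw]] := HgE u Hu; exists w; split.
  - by have [w Hw] := Etotal u; exists w; split.
have [ch Hch'] := fin_all_exists Hch.
exists (fun s => ch (last v s)); split; [|split].
- by move=> x s _ _; case: (Hch' (last x s)).
- by move=> x s y t _ _ _ /= ->.
move=> pi Hplay Hpi0 Hcons t Ht.
have Hstep0 : forall n, exists m, prog_cond rho (pi n) (pi n.+1) m /\ ge_i (p (pi n)) (rho (pi n)) m.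
  move=> n; case: (boolP (pi n \in VE)) => Hin.
  - have Hown : owned VE true (pi n) by rewrite /owned Hin.
    have := Hcons n Hown; rewrite prefix_last => ->.
    by have [_ /(_ Hin) [m [[_ [Hm _]] Hm2]]] := Hch' (pi n); exists m.
  - by have [m [[_ [Hm _]] Hm2]] := HgO (pi n) Hin (pi n.+1) (Hplay n); exists m.
case Hrv: (rho v) => [r|]; last exact: mle_None.
have HSome : forall n, exists b, rho (pi n) = Some b.
  elim=> [|n [b Hb]]; first by rewrite Hpi0 Hrv; exists r.
  have [m [Hc Hge]] := Hstep0 n.
  case Hw: (rho (pi n.+1)) => [c|]; first by exists c.
  exfalso; move: Hc; rewrite /prog_cond Hw Hb in Hge *.
  case: ifP => _.
  - move=> [H|[Hm _]]; first by move: H; rewrite /lt_i.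
    by rewrite Hm in Hge; apply: ge_i_None Hge.
  - case: m Hge => [c|] Hge; last by move=> _; apply: (ge_i_None Hge).
    by rewrite /ge_i /=; tauto.
pose a n := match rho (pi n) with Some b => b | None => r end.
have Ha : forall n, rho (pi n) = Some (a n).
  by move=> n; rewrite /a; have [b ->] := HSome n.
have Hstep : forall n, if odd (p (pi n)) then tlt_upto (p (pi n)) (a n.+1) (a n)
                             else tge (p (pi n)) (a n) (a n.+1).
  move=> n; have [m [Hc Hge]] := Hstep0 n.
  move: Hc; rewrite /prog_cond; case: ifP => _.
  - case=> [Hlt|[_ Hw]]; last by move: Hw; rewrite Ha.
    by have := lt_ge_i Hlt Hge; rewrite !Ha.
  - move=> Hge2; have := ge_i_trans Hge Hge2; rewrite !Ha /ge_i /tge /=; tauto.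
case: t Ht => [f|] Ht.
- have := desc_theta Hstep Ht.
  by have := Ha 0; rewrite Hpi0 Hrv => -[<-].
- by case: (desc_even_wins Hstep (theta_None Ht)).
Qed.

End Game.


Section Surg.
Variable V : finType.
Variable E : rel V.
Variable p : V -> nat.
Variable VE : pred V.

Definition dom_pattern (pi : nat -> V) : Prop :=
  exists j a b, odd j /\ a < b /\ pi a = pi b /\ p (pi a) = j /\ forall k, k <= b -> j <= p (pi k).

Definition cutb (W : seq V) (x : V) : bool :=
  (x \in W) && odd (p x) && all (fun y => p x <= p y) W.

Definition stepv (W : seq V) (x : V) : seq V :=
  if cutb W x then take (index x W).+1 W else rcons W x.

Definition vf (x : V) (s : seq V) : seq V := foldl stepv [:: x] s.

Lemma vf_rcons x s y : vf x (rcons s y) = stepv (vf x s) y.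
Proof. by rewrite /vf foldl_rcons. Qed.

Lemma last_take_nth (x : V) (s : seq V) n : n <= size s -> last x (take n s) = nth x (x :: s) n.
Proof.
move=> Hn; rewrite (last_nth x) size_takel //.
by case: n Hn => [|n] Hn //=; rewrite nth_take.
Qed.

Lemma vf_path x s : path E x s -> exists W, vf x s = x :: W /\ path E x W /\ last x W = last x s.
Proof.
elim/last_ind: s => [|s y IH]; first by exists [::].
rewrite rcons_path => /andP [Hp He].
have [W [HW [HWp HWl]]] := IH Hp.
rewrite vf_rcons HW /stepv; case: ifP => Hc.
- have Hin : y \in x :: W by move: Hc; rewrite /cutb => /andP [/andP [H _] _].
  exists (take (index y (x :: W)) W); split => //; split; first exact: take_path.
  rewrite last_take_nth ?nth_index ?last_rcons //.
  by move: (index_mem y (x :: W)); rewrite Hin /= ltnS.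
- exists (rcons W y); split => //; split; last by rewrite !last_rcons.
  by rewrite rcons_path HWp HWl.
Qed.

Definition sur (sigma : seq V -> V) (h : seq V) : V :=
  match h with x :: s => sigma (vf x s) | [::] => sigma [::] end.

Lemma sur_strategy sigma : strategy E VE false sigma -> strategy E VE false (sur sigma).
Proof.
move=> Hs x s Hp Ho /=.
have [W [-> [HWp HWl]]] := vf_path Hp.
rewrite -HWl; apply: Hs => //; by rewrite HWl.
Qed.


Lemma cutb_mem W x : cutb W x -> x \in W.
Proof. by rewrite /cutb => /andP [/andP [H _] _]. Qed.

Lemma cut_size W x : cutb W x -> (index x W).+1 <= size W.
Proof. by move=> /cutb_mem; rewrite -index_mem. Qed.

Section Surg2.
Variable sigma : seq V -> V.
Variable pi : nat -> V.
Hypothesis Hplay : play E pi.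
Hypothesis Hcons : consistent VE false (sur sigma) pi.

Definition VV t := vf (pi 0) (map pi (iota 1 t)).

Lemma VV0 : VV 0 = [:: pi 0].
Proof. by []. Qed.

Lemma VVS t : VV t.+1 = stepv (VV t) (pi t.+1).
Proof.
by rewrite /VV -(addn1 t) iotaD map_cat cats1 /= add1n addn1 vf_rcons.
Qed.

Lemma prefix_path t : path E (pi 0) (map pi (iota 1 t)).
Proof.
elim: t => [|t IH] //.
have -> : map pi (iota 1 t.+1) = rcons (map pi (iota 1 t)) (pi t.+1).
  by rewrite -(addn1 t) iotaD map_cat cats1 /= add1n addn1.
rewrite rcons_path IH /=.
by have := prefix_last pi t (pi 0); rewrite /Defs.prefix /= => ->; apply: Hplay.
Qed.

Lemma VV_path t : exists W, VV t = pi 0 :: W /\ path E (pi 0) W /\ last (pi 0) W = pi t.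
Proof.
have [W [H1 [H2 H3]]] := vf_path (prefix_path t).
exists W; split => //; split => //; rewrite H3.
by have := prefix_last pi t (pi 0); rewrite /Defs.prefix /=.
Qed.

Lemma VV_last t x0 : last x0 (VV t) = pi t.
Proof. by have [W [-> [_ H]]] := VV_path t. Qed.

Lemma VV_size t : 0 < size (VV t).
Proof. by have [W [-> _]] := VV_path t. Qed.

Lemma VV_next t : owned VE false (pi t) -> pi t.+1 = sigma (VV t).
Proof. by move=> H; rewrite (Hcons H). Qed.

Definition cons_seq (W : seq V) := forall i, i.+1 < size W ->
  owned VE false (nth (pi 0) W i) -> nth (pi 0) W i.+1 = sigma (take i.+1 W).

Lemma VV_cons t : cons_seq (VV t).
Proof.
elim: t => [|t IH]; first by move=> [|i].
rewrite VVS /stepv; case: ifP => Hc.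
- move=> i; set n := (index _ _).+1 => Hi Ho.
  have Hn := cut_size Hc; rewrite -/n in Hn.
  have Hin : i.+1 < n by move: Hi; rewrite size_take_min; lia.
  have Hin' : i < n by apply: ltnW.
  rewrite !nth_take // in Ho *.
  rewrite take_takel //; apply: IH Ho; exact: leq_trans Hin Hn.
- move=> i Hi Ho; rewrite size_rcons ltnS in Hi.
  rewrite nth_rcons (leq_trans (ltnSn i) Hi) in Ho.
  case: (ltngtP i.+1 (size (VV t))) => Hi'.
  + rewrite nth_rcons Hi' -cats1 takel_cat; last exact: ltnW.
    exact: IH.
  + by move: Hi; rewrite leqNgt Hi'.
  + rewrite nth_rcons -Hi' ltnn eqxx -cats1 takel_cat // take_oversize ?Hi' //.
    apply: VV_next; move: Ho; suff -> : nth (pi 0) (VV t) i = pi t by [].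
    by rewrite -(VV_last t (pi 0)) (last_nth (pi 0)) -Hi'.
Qed.

Definition patfree (W : seq V) := forall b, b < size W -> ~~ cutb (take b W) (nth (pi 0) W b).

Lemma VV_patfree t : patfree (VV t).
Proof.
elim: t => [|t IH]; first by move=> [|b].
rewrite VVS /stepv; case: ifP => Hc.
- move=> b; set n := (index _ _).+1 => Hb.
  have Hbn : b < n by move: Hb; rewrite size_take_min; lia.
  rewrite nth_take // take_takel; last exact: ltnW.
  apply: IH; exact: leq_trans Hbn (cut_size Hc).
- move=> b; rewrite size_rcons ltnS leq_eqVlt => /orP [/eqP ->|Hb].
  + by rewrite nth_rcons ltnn eqxx -cats1 take_size_cat // Hc.
  + by rewrite nth_rcons Hb -cats1 takel_cat ?IH // ltnW.
Qed.

Definition allge (i : nat) (W : seq V) := all (fun y => i <= p y) W.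

Lemma VV_J i t : allge i (VV t) -> forall s, s <= t -> i <= p (pi s).
Proof.
elim: t => [|t IH].
  by rewrite VV0 /allge /= andbT => H s; rewrite leqn0 => /eqP ->.
rewrite VVS /stepv; case: ifP => Hc.
- have Hix : index (pi t.+1) (VV t) < size (VV t) by rewrite index_mem; apply: cutb_mem.
  rewrite (take_nth (pi 0)) // nth_index ?cutb_mem // /allge all_rcons => /andP [Hx _].
  have HW : allge i (VV t).
    move: Hc; rewrite /cutb => /andP [_ /allP H]; apply/allP => y /H; exact: leq_trans Hx.
  move=> s; rewrite leq_eqVlt => /orP [/eqP ->|Hs] //.
  exact: IH.
- rewrite /allge all_rcons => /andP [Hx HW] s.
  rewrite leq_eqVlt => /orP [/eqP ->|Hs] //; exact: IH.
Qed.

Lemma VV_I i t : forall n, n <= size (VV t) -> allge i (take n (VV t)) ->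
  exists n', n' <= t.+1 /\ S_ p pi i n' /\ count (fun y => p y == i) (take n (VV t)) <= degree p pi i n'.
Proof.
elim: t => [|t IH].
  move=> n; rewrite VV0 /= => Hn; case: n Hn => [|[|]] // _.
    by move=> _; exists 0.
  rewrite /allge /= andbT => H; exists 1; split => //; split; first by case.
  by rewrite degreeS degree0 /= addn0.
rewrite VVS /stepv; case: ifP => Hc n.
- set m := (index _ _).+1 => Hn.
  have Hnm : n <= m by move: Hn; rewrite size_take_min; lia.
  rewrite take_takel // => Ha.
  have [n' [H1 H2]] := IH n (leq_trans Hnm (cut_size Hc)) Ha.
  by exists n'; split => //; apply: leq_trans H1 _.
- rewrite size_rcons leq_eqVlt => /orP [/eqP ->|]; last rewrite ltnS => Hn.
  + rewrite take_oversize ?size_rcons // /allge all_rcons => /andP [Hx HW].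
    have HW' : allge i (take (size (VV t)) (VV t)) by rewrite take_size.
    have [n' [H1 [H2 H3]]] := IH (size (VV t)) (leqnn _) HW'.
    exists t.+2; split => //; split.
      move=> k; rewrite ltnS leq_eqVlt => /orP [/eqP ->|Hk] //.
      by apply: (VV_J HW); rewrite -ltnS.
    rewrite take_size in H3; rewrite -cats1 count_cat /= addn0 degreeS.
    apply: leq_add => //; exact: leq_trans H3 (degree_mono _ _ _ H1).
  + rewrite -cats1 takel_cat // => Ha.
    have [n' [H1 H2]] := IH n Hn Ha.
    by exists n'; split => //; apply: leq_trans H1 _.
Qed.

Section Tail.
Variables (k N t0 : nat).
Hypothesis Hk : ~~ odd k.
Hypothesis HN : forall n, N <= n -> k <= p (pi n).
Hypothesis Ht0 : N <= t0.
Hypothesis Hpt0 : p (pi t0) = k.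

Lemma NC d : VV (t0 + d) = VV t0 ++ map pi (iota t0.+1 d).
Proof.
elim: d => [|d IH]; first by rewrite addn0 cats0.
rewrite addnS VVS /stepv IH.
have Hin : pi t0 \in VV t0 ++ map pi (iota t0.+1 d).
  rewrite mem_cat; apply/orP; left.
  have [W [-> [_ HW]]] := VV_path t0; rewrite -HW; exact: mem_last.
case: ifP => Hc.
  exfalso; move: Hc; rewrite /cutb => /andP [/andP [_ Ho] /allP Ha].
  have H1 := Ha _ Hin; rewrite Hpt0 in H1.
  have H2 : k <= p (pi (t0 + d).+1) by apply: HN; rewrite (leq_trans Ht0) // leqW // leq_addr.
  have e : p (pi (t0 + d).+1) = k by apply/eqP; rewrite eqn_leq H1 H2.
  by move: Ho; rewrite e (negbTE Hk).
by rewrite rcons_cat -(addn1 d) iotaD map_cat /= cats1 addSn.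
Qed.

Definition L := size (VV t0).
Definition Pi n := nth (pi 0) (VV (t0 + n)) n.

Lemma L_pos : 0 < L.
Proof. exact: VV_size. Qed.

Lemma VV_size_t d : size (VV (t0 + d)) = L + d.
Proof. by rewrite NC size_cat size_map size_iota. Qed.

Lemma Pi_eq n m : n <= m -> nth (pi 0) (VV (t0 + m)) n =
  if n < L then nth (pi 0) (VV t0) n else pi (t0.+1 + (n - L)).
Proof.
move=> Hnm; rewrite NC nth_cat -/L; case: ifP => // Hn.
have HL := L_pos.
rewrite (nth_map 0) ?size_iota ?nth_iota //; lia.
Qed.

Lemma Pi_nth n m : n <= m -> nth (pi 0) (VV (t0 + m)) n = Pi n.
Proof. by move=> Hnm; rewrite /Pi !Pi_eq. Qed.

Lemma take_Pi n m : n <= m -> take n.+1 (VV (t0 + m)) = map Pi (iota 0 n.+1).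
Proof.
move=> Hnm; have HL := L_pos.
apply: (@eq_from_nth _ (pi 0)).
  by rewrite size_map size_iota size_takel // VV_size_t; lia.
move=> j; rewrite size_takel ?VV_size_t; last lia.
move=> Hj; rewrite nth_take // (nth_map 0) ?size_iota // nth_iota // add0n.
apply: Pi_nth; lia.
Qed.

Lemma take_Pi' n : take n (VV (t0 + n)) = map Pi (iota 0 n).
Proof. case: n => [|m]; first by rewrite take0. exact: (take_Pi (leqnSn m)). Qed.

Lemma Pi_prefix n m : n <= m -> Defs.prefix Pi n = take n.+1 (VV (t0 + m)).
Proof. by move=> H; rewrite take_Pi. Qed.

Lemma Pi0 : Pi 0 = pi 0.
Proof. by rewrite /Pi addn0; have [W [-> _]] := VV_path t0. Qed.

Lemma Pi_play : play E Pi.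
Proof.
move=> n; have [W [HW [Hp _]]] := VV_path (t0 + n.+1).
have HL := L_pos.
have Hs : n < size W.
  by have := VV_size_t n.+1; rewrite HW /=; lia.
have := (pathP (pi 0) Hp) n Hs.
rewrite -(Pi_nth (leqnSn n)) -(Pi_nth (leqnn n.+1)) HW //.
Qed.

Lemma Pi_cons : consistent VE false sigma Pi.
Proof.
move=> n Ho; have HL := L_pos.
have Hs : n.+1 < size (VV (t0 + n.+1)) by rewrite VV_size_t; lia.
rewrite (Pi_prefix (leqnSn n)).
have := VV_cons Hs; rewrite (Pi_nth (leqnSn n)) (Pi_nth (leqnn n.+1)).
by apply.
Qed.

Lemma Pi_tail m : Pi (L + m) = pi (t0.+1 + m).
Proof.
rewrite /Pi Pi_eq // ltnNge leq_addr /=.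
by rewrite addKn.
Qed.

Lemma Pi_nopat : ~ dom_pattern Pi.
Proof.
move=> [j [a [b [Hj [Hab [Heq [Hpa Hall]]]]]]].
have HL := L_pos.
have Hb : b < size (VV (t0 + b)) by rewrite VV_size_t; lia.
have := VV_patfree Hb; rewrite take_Pi' /cutb.
rewrite (Pi_nth (leqnn b)) -Heq Hpa Hj andbT.
have -> : Pi a \in map Pi (iota 0 b) by apply: map_f; rewrite mem_iota.
rewrite /=; apply/negP; rewrite negbK; apply/allP => y /mapP [k' Hk' ->].
apply: Hall; move: Hk'; rewrite mem_iota add0n => /andP [_ H]; exact: ltnW.
Qed.

Lemma Pi_le i n : S_ p Pi i n -> exists n', S_ p pi i n' /\ degree p Pi i n <= degree p pi i n'.
Proof.
move=> Sn.
have Hn : n <= size (VV (t0 + n)) by rewrite VV_size_t leq_addl.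
have Ha : allge i (take n (VV (t0 + n))).
  rewrite take_Pi'; apply/allP => y /mapP [k' Hk' ->]; apply: Sn.
  by move: Hk'; rewrite mem_iota add0n => /andP [_ H].
have [n' [_ [H1 H2]]] := VV_I Hn Ha.
exists n'; split => //; move: H2; rewrite take_Pi' count_map.
by [].
Qed.

End Tail.
End Surg2.
End Surg.


Section Game2.
Variable V : finType.
Variable E : rel V.
Variable p : V -> nat.
Variable VE : pred V.
Local Notation D := (dd p).
Local Notation T := (tup p).
Local Notation M := (meas p).

Definition Guar (u : V) (m : M) : Prop :=
  exists sigma, strategy E VE false sigma /\
    forall pi, play E pi -> pi 0 = u -> consistent VE false sigma pi ->
      forall t, IsTheta pi t -> mle m t.

Definition GuarP (u : V) (m : M) : Prop :=
  exists sigma, strategy E VE false sigma /\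
    forall pi, play E pi -> pi 0 = u -> consistent VE false sigma pi ->
      dom_pattern p pi \/ forall t, IsTheta pi t -> mle m t.

Lemma surgery u m : GuarP u m -> Guar u m.
Proof.
move=> [sigma [Hs HP]]; exists (sur p sigma); split; first exact: sur_strategy.
move=> pi Hplay Hpi0 Hcons [f|] Ht; last exact: mle_None.
have [Hnw Hf] := theta_Some Ht.
have [k [Hinf Hlow]] := least_inf p pi.
have Hk : ~~ odd k.
  by apply/negP => Ho; apply: Hnw; exists k.
have [N HN] := eventually_ge Hlow.
have [t0 [Ht0 Hpt0]] := Hinf N.
set Pi := Pi p pi t0.
have HPi0 : Pi 0 = u by rewrite /Pi (Pi0 p Hplay).
have := HP Pi (Pi_play Hplay Hk HN Ht0 Hpt0) HPi0 (Pi_cons Hplay Hcons Hk HN Ht0 Hpt0).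
case=> [Hpat|HG]; first by case: (Pi_nopat Hplay Hk HN Ht0 Hpt0 Hpat).
have [[g|] Htg] := theta_exists p Pi; last first.
  have := theta_None Htg.
  rewrite (odd_wins_tail p (Pi_tail Hplay Hk HN Ht0 Hpt0)) => H; by case: Hnw.
apply: mle_trans (HG _ Htg) _.
have [_ Hg] := theta_Some Htg.
apply: mle_comp => i; have [Hg1 Hg2] := Hg i; have [Hf1 Hf2] := Hf i.
case Ho: (odd i); last by rewrite Hg1 ?Ho.
have [_ [n [Sn <-]]] := Hg2 Ho.
have [n' [Sn' Hle]] := Pi_le Hplay Hk HN Ht0 Hpt0 Sn.
have [Hmax _] := Hf2 Ho.
exact: leq_trans Hle (Hmax _ Sn').
Qed.

End Game2.


Section Game3.
Variable V : finType.
Variable E : rel V.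
Variable p : V -> nat.
Variable VE : pred V.
Local Notation D := (dd p).
Local Notation T := (tup p).
Local Notation M := (meas p).

Lemma MaxDeg_shift_le (pi : nat -> V) i c : i <= p (pi 0) ->
  MaxDeg p (fun n => pi n.+1) i c -> MaxDeg p pi i (c + (p (pi 0) == i)).
Proof.
move=> Hi [Hmax [n [Sn Hn]]]; split.
- move=> [|n'] Sn'; first by rewrite degree0.
  rewrite degree_shift addnC leq_add2r; apply: Hmax => k Hk; exact: Sn' k.+1 Hk.
- exists n.+1; split; last by rewrite degree_shift Hn addnC.
  by move=> [|k] Hk //; apply: Sn.
Qed.

Lemma MaxDeg_shift_gt (pi : nat -> V) i : p (pi 0) < i -> MaxDeg p pi i 0.
Proof.
move=> Hi; split; last by exists 0; split => //; rewrite degree0.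
move=> [|n] Sn; first by rewrite degree0.
by have := Sn 0 (ltn0Sn n); rewrite leqNgt Hi.
Qed.

Lemma shift_theta (pi : nat -> V) f f' : IsTheta pi (Some f) -> IsTheta (fun n => pi n.+1) (Some f') ->
  forall i : 'I_D, (i <= p (pi 0) -> f i = f' i + (odd i && (p (pi 0) == i))) /\
                   (p (pi 0) < i -> f i = 0).
Proof.
move=> /theta_Some [_ Hf] /theta_Some [_ Hf'] i.
have [Hf1 Hf2] := Hf i; have [Hf1' Hf2'] := Hf' i.
case Ho: (odd i); last by rewrite Hf1 ?Hf1' ?Ho.
split=> Hi.
- rewrite /=; apply: MaxDeg_uniq (Hf2 Ho) _; exact: MaxDeg_shift_le (Hf2' Ho).
- apply: MaxDeg_uniq (Hf2 Ho) _; exact: MaxDeg_shift_gt.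
Qed.

Lemma prog_shift (rw : M) (q : nat) (f f' : T) : q < D ->
  (forall i : 'I_D, i <= q -> f i = f' i + (odd i && (q == i))) -> mle rw (Some f') ->
  if odd q then lt_i q rw (Some f) \/ (Some f = None /\ rw = None) else ge_i q (Some f) rw.
Proof.
move=> Hq Hrel; case: rw => [a|]; last by case=> // /mlt_None.
pose oq := Ordinal Hq.
have Hrel' : forall i : 'I_D, i < q -> f i = f' i.
  move=> i Hi; rewrite Hrel ?(ltnW Hi) //.
  by rewrite (_ : (q == i) = false) ?andbF ?addn0 //; apply/negbTE; rewrite neq_ltn Hi orbT.
have Hfq : f oq = f' oq + odd q by rewrite Hrel //= eqxx andbT.
move=> Hmle.
have Hcase : a = f' \/ lexlt a f' by case: Hmle => [[<-]|/mltSS H]; [left | right].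
case Hoq: (odd q).
- left; rewrite /lt_i.
  case: Hcase => [->|[j [Hj1 Hj2]]].
    exists oq; split => //; split; first by move=> k Hk; rewrite Hrel'.
    by rewrite Hfq Hoq addn1.
  case: (ltnP j q) => Hjq.
  + exists j; split; first exact: ltnW.
    split; first by move=> k Hk; rewrite Hj1 // Hrel' // (ltn_trans Hk Hjq).
    by rewrite Hrel' //.
  + exists oq; split => //; split.
      by move=> k Hk; rewrite Hj1 ?Hrel' // (leq_trans Hk Hjq).
    rewrite Hfq Hoq addn1 ltnS.
    case: (ltngtP j q) Hjq => // Hjq' _.
      by rewrite Hj1.
    have -> : oq = j by apply: val_inj; rewrite /= Hjq'.
    exact: ltnW.
- have Hrel2 : forall i : 'I_D, i <= q -> f i = f' i.
    move=> i Hi; rewrite Hrel //.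
    by case: eqP => [<-|]; [rewrite Hoq | rewrite andbF]; rewrite addn0.
  rewrite /ge_i /=.
  case: Hcase => [->|[j [Hj1 Hj2]]].
    by right => k Hk; rewrite Hrel2.
  case: (leqP j q) => Hjq.
  + left; exists j; split => //; split; first by move=> k Hk; rewrite Hj1 // Hrel2 // ltnW // (leq_trans Hk Hjq).
    by rewrite Hrel2.
  + right => k Hk; rewrite Hrel2 // Hj1 //; exact: leq_ltn_trans Hk Hjq.
Qed.


Lemma pigeon (pi : nat -> V) i n : #|[set v | p v == i]| < degree p pi i n ->
  exists a b, a < b /\ b < n /\ pi a = pi b /\ p (pi a) = i.
Proof.
move=> Hd.
set s := [seq k <- iota 0 n | p (pi k) == i].
have Hsz : size s = degree p pi i n by rewrite size_filter.
have Hus : uniq s by rewrite filter_uniq // iota_uniq.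
have Hnu : ~~ uniq (map pi s).
  apply/negP => Hu.
  have := uniq_leq_size Hu (s2 := enum [set v | p v == i]).
  rewrite size_map Hsz -cardE => H; suff: degree p pi i n <= #|[set v | p v == i]| by rewrite leqNgt Hd.
  apply: H => y /mapP [k]; rewrite mem_filter => /andP [Hk _] ->.
  by rewrite mem_enum inE.
have Hni : ~ {in s &, injective pi} by move=> Hinj; move: Hnu; rewrite (map_inj_in_uniq Hinj) Hus.
have [k1 [k2 [Hk1 [Hk2 [He Hne]]]]] : exists k1 k2, k1 \in s /\ k2 \in s /\ pi k1 = pi k2 /\ k1 <> k2.
  apply: NNPP => H; apply: Hni => k1 k2 Hk1 Hk2 He; apply: NNPP => Hne; apply: H.
  by exists k1, k2.
move: Hk1 Hk2; rewrite !mem_filter !mem_iota !add0n => /andP [/eqP Hp1 /andP [_ H1]] /andP [/eqP Hp2 /andP [_ H2]].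
case: (ltngtP k1 k2) => Hk.
- by exists k1, k2.
- by exists k2, k1.
- by case: Hne.
Qed.

Lemma overflow (pi : nat -> V) (f : T) : IsTheta pi (Some f) -> ~ inM (Some f) -> dom_pattern p pi.
Proof.
move=> /theta_Some [_ Hf] Hn.
have [i Hi] : exists i : 'I_D, odd i /\ #|[set v | p v == i]| < f i.
  apply: NNPP => H; apply: Hn => i; have [H1 _] := Hf i; split => // Ho.
  by rewrite leqNgt; apply/negP => H2; apply: H; exists i.
case: Hi => Ho Hlt; have [_ [n [Sn Hn']]] := (Hf i).2 Ho.
rewrite -Hn' in Hlt; have [a [b [Hab [Hbn [He Hpa]]]]] := pigeon Hlt.
exists i, a, b; split => //; split => //; split => //; split => // k Hk.
by apply: Sn; apply: leq_ltn_trans Hk Hbn.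
Qed.

Lemma map_iotaS (pi : nat -> V) m n : map pi (iota m.+1 n) = map (fun k => pi k.+1) (iota m n).
Proof. by elim: n m => [|n IH] m //=; rewrite IH. Qed.

Lemma prefix_shift (pi : nat -> V) n : Defs.prefix pi n.+1 = pi 0 :: Defs.prefix (fun k => pi k.+1) n.
Proof. by rewrite /Defs.prefix /= map_iotaS. Qed.

Definition compstrat (u w0 : V) (sc : V -> V) (sf : V -> seq V -> V) (s : seq V) : V :=
  match s with
  | x :: s' => match s' with [::] => if x == u then w0 else sc x | y :: _ => sf y s' end
  | [::] => u
  end.

Lemma compose (u w0 : V) (Euw0 : E u w0) (sc : V -> V) (Hsc : forall x, E x (sc x))
  (rw : V -> M) (sf : V -> seq V -> V)
  (Hsf : forall w, strategy E VE false (sf w) /\ forall pi, play E pi -> pi 0 = w ->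
        consistent VE false (sf w) pi -> forall t, IsTheta pi t -> mle (rw w) t)
  (m : M) (Hm : forall w, E u w -> (u \notin VE -> w = w0) -> forall g : T, inM (Some g) ->
        prog_cond rw u w (Some g) -> mle m (Some g)) : GuarP E VE u m.
Proof.
exists (compstrat u w0 sc sf); split.
  move=> x [|y s] Hp Ho /=.
    by case: eqP => [->|_].
  move: Hp => /= /andP [_ Hp]; exact: (Hsf y).1.
move=> pi Hplay Hpi0 Hcons.
case: (classic (dom_pattern p pi)) => [H|Hnp]; [by left | right].
set pi' := fun n => pi n.+1.
have Hw : E u (pi' 0) by rewrite -Hpi0; apply: Hplay.
have Hw0 : u \notin VE -> pi' 0 = w0.
  move=> Hu; have Ho : owned VE false (pi 0) by rewrite /owned Hpi0 (negbTE Hu).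
  by rewrite /pi' (Hcons 0 Ho) /= Hpi0 eqxx.
have Hplay' : play E pi' by move=> n; apply: Hplay.
have Hcons' : consistent VE false (sf (pi' 0)) pi'.
  move=> n Ho; rewrite /pi' (Hcons n.+1 Ho) prefix_shift.
  by rewrite /Defs.prefix /=.
have HG := (Hsf (pi' 0)).2 pi' Hplay' erefl Hcons'.
move=> [f|] Ht; last exact: mle_None.
have [t' Ht'] := theta_exists p pi'.
have Hle := HG t' Ht'.
case: t' Ht' Hle => [f'|] Ht' Hle; last first.
  have := theta_None Ht'; rewrite -(odd_wins_tail p (A:=1) (B:=0) (pi1:=pi) (pi2:=pi')) //.
  by have [H _] := theta_Some Ht.
case: (classic (inM (Some f))) => Hin; last by case: Hnp; apply: overflow Ht Hin.
apply: (Hm (pi' 0)) => //.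
have Hq : p u < D by rewrite ltnS; apply: leq_bigmax.
have := shift_theta Ht Ht'; rewrite Hpi0 => Hrel.
have := @prog_shift (rw (pi' 0)) (p u) f f' Hq (fun i Hi => (Hrel i).1 Hi) Hle.
by rewrite /prog_cond.
Qed.

End Game3.


Section Game4.
Variable V : finType.
Variable E : rel V.
Variable p : V -> nat.
Variable VE : pred V.
Hypothesis Etotal : forall v, exists w, E v w.
Local Notation D := (dd p).
Local Notation T := (tup p).
Local Notation M := (meas p).

Lemma sc_exists : exists sc : V -> V, forall x, E x (sc x).
Proof. exact: fin_all_exists Etotal. Qed.

Definition zero : T := [ffun _ => 0].

Lemma Guar_zero u : Guar E VE u (Some zero).
Proof.
have [sc Hsc] := sc_exists.
exists (fun s => sc (last u s)); split; first by move=> x s _ _ /=.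
move=> pi _ _ _ [f|] _; last exact: mle_None.
by apply: mle_comp => i; rewrite ffunE.
Qed.

Lemma inM_zero : inM (Some zero).
Proof. by move=> i; rewrite ffunE. Qed.

Lemma Guar_down u (m m' : M) : Guar E VE u m -> mle m' m -> Guar E VE u m'.
Proof.
move=> [s [Hs H]] Hle; exists s; split => // pi H1 H2 H3 t Ht.
exact: mle_trans Hle (H pi H1 H2 H3 t Ht).
Qed.

Lemma prog_exists (rw : V -> M) u w : exists m, IsProg rw u w m.
Proof.
have Hne : exists m : M, inM m /\ prog_cond rw u w m.
  exists None; split => //; rewrite /prog_cond; case: ifP => _; case: (rw w) => [a|] //=;
  [by left | by right | by left | by right].
have [m [[Hm1 Hm2] Hm3]] := meas_min Hne.
by exists m; split => //; split => // m' H1 H2; apply: Hm3.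
Qed.

Lemma rp_exists : exists rp : V -> M, forall u, (inM (rp u) /\ Guar E VE u (rp u)) /\
  forall m', inM m' /\ Guar E VE u m' -> mle m' (rp u).
Proof.
have H : forall u, exists m : M, (inM m /\ Guar E VE u m) /\
  forall m', inM m' /\ Guar E VE u m' -> mle m' m; last exact: fin_all_exists H.
move=> u; apply: (@meas_max _ p _ #|V|); first by exists (Some zero); split; [apply: inM_zero | apply: Guar_zero].
move=> a [Ha _] i; have [H1 H2] := Ha i.
case Ho: (odd i); last by rewrite H1 ?Ho.
by apply: leq_trans (H2 Ho) (max_card _).
Qed.

Lemma part1 (rho : V -> M) (Hrho : least_gppm E VE rho) v :
  exists sigmaO : seq V -> V, strategy E VE false sigmaO /\
     forall pi : nat -> V, play E pi -> pi 0 = v -> consistent VE false sigmaO pi ->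
       forall t, IsTheta pi t -> mle (rho v) t.
Proof.
have [rp Hrp] := rp_exists.
have [sc Hsc] := sc_exists.
have [sf Hsf] : exists sf : V -> seq V -> V, forall w, strategy E VE false (sf w) /\
   forall pi, play E pi -> pi 0 = w -> consistent VE false (sf w) pi -> forall t, IsTheta pi t -> mle (rp w) t.
  have H : forall w, exists s : seq V -> V, strategy E VE false s /\
   forall pi, play E pi -> pi 0 = w -> consistent VE false s pi -> forall t, IsTheta pi t -> mle (rp w) t.
    by move=> w; exact: (Hrp w).1.2.
  exact: fin_all_exists H.
have Hg : gppm E VE rp.
  split; first by move=> u; exact: (Hrp u).1.1.
  split.
  - move=> u Hu; apply: NNPP => Hno.
    have [pr Hpr] : exists pr : V -> M, forall w, IsProg rp u w (pr w).
      have H : forall w, exists m : M, IsProg rp u w m by move=> w; apply: prog_exists.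
      exact: fin_all_exists H.
    have Hlt : forall w, E u w -> mlt (rp u) (pr w).
      move=> w Euw; case: (mle_total (pr w) (rp u)) => // Hle.
      by case: Hno; exists w; split => //; exists (pr w); split => //; apply: mle_ge_i.
    have [w1 Hw1] := Etotal u.
    have [m0 [[w2 [Ew2 ->]] Hmin]] := @meas_min _ p (fun m => exists w, E u w /\ m = pr w)
       (ex_intro _ _ (ex_intro _ w1 (conj Hw1 erefl))).
    have HGP : GuarP E VE u (pr w2).
      apply: (compose Ew2 Hsc Hsf) => w Euw _ g Hgm Hgc.
      apply: mle_trans (Hmin (pr w) (ex_intro _ w (conj Euw erefl))) _.
      by have [_ [_ H]] := Hpr w; apply: H.
    have HG := surgery HGP.
    have Hin : inM (pr w2) by have [H _] := Hpr w2.
    have := (Hrp u).2 (pr w2) (conj Hin HG).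
    by move/mle_mlt_false; apply; apply: Hlt.
  - move=> u Hu w Euw.
    have [m Hm] := prog_exists rp u w.
    exists m; split => //; apply: mle_ge_i.
    apply: (Hrp u).2; split; first by case: Hm.
    apply: surgery; apply: (compose Euw Hsc Hsf) => w' Euw' Hw' g Hgm Hgc.
    rewrite (Hw' Hu) in Hgc; by have [_ [_ H]] := Hm; apply: H.
have Hle := Hrho.2 rp Hg v.
have [s [Hs H]] := Guar_down (Hrp v).1.2 Hle.
by exists s; split.
Qed.

End Game4.

Theorem theorem3 (V : finType) (E : rel V) (p : V -> nat) (VE : pred V)
  (Etotal : forall v, exists w, E v w)
  (rho : V -> meas p) (Hrho : least_gppm E VE rho) (v : V) :
  (exists sigmaO : seq V -> V, strategy E VE false sigmaO /\
     forall pi : nat -> V, play E pi -> pi 0 = v -> consistent VE false sigmaO pi ->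
       forall t, IsTheta pi t -> mle (rho v) t)
  /\
  (exists sigmaE : seq V -> V, strategy E VE true sigmaE /\ positional E VE true sigmaE /\
     forall pi : nat -> V, play E pi -> pi 0 = v -> consistent VE true sigmaE pi ->
       forall t, IsTheta pi t -> mle t (rho v)).
Proof.
split; first exact: part1.
exact: (part2 Etotal (proj1 Hrho) v).
Qed.
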